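(* Let $(\mathcal{M},\times,1)$ be a cartesian monoidal category with equivalences. Then there is an isomorphism of categories \[ \mathrm{HtyAlg}(\mathbf{Mon},\mathcal{M})\;\cong\;\mathbf{Special}((\Delta^+)^{\mathrm{op}},\mathcal{M}). \]
   Context: A monoidal category with equivalences is a monoidal category with a class of morphisms (equivalences) containing all isomorphisms, satisfying two-out-of-three for composition, and closed under $\otimes$; cartesian means the monoidal structure is given by chosen finite products. $\Delta$: objects $n=\{0,\dots,n-1\}$ ($n\ge0$), order-preserving maps, monoidal under ordinal sum $+$ with unit $0$. $\mathrm{HtyAlg}(\mathbf{Mon},\mathcal{M})$ (homotopy monoids in $\mathcal{M}$) is the category whose objects are colax monoidal functors $(X,\xi):(\Delta,+,0)\to(\mathcal{M},\times,1)$ (functor $X$ with natural, not necessarily invertible maps $\xi_{m,n}:X(m+n)\to X(m)\times X(n)$, $\xi_0:X(0)\to1$ satisfying coassociativity and counit axioms) with $\xi_0$ and all $\xi_{m,n}$ equivalences, and whose morphisms are monoidal transformations. $\Delta^+$: objects $[n]=\{0,\dots,n\}$, order-preserving maps. A special simplicial object in $\mathcal{M}$ is a functor $Y:(\Delta^+)^{\mathrm{op}}\to\mathcal{M}$ such that for each $n\ge0$ the map $(Y(\beta^n_0),\dots,Y(\beta^n_{n-1})):Y[n]\to Y[1]^n$ is an equivalence, where $\beta^n_j:[1]\to[n]$, $\beta^n_j(i)=i+j$ (equivalently, the maps $(Y(\alpha^1_{m,n}),Y(\alpha^2_{m,n})):Y[m+n]\to Y[m]\times Y[n]$ with $\alpha^1_{m,n}(i)=i$,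 $\alpha^2_{m,n}(i)=m+i$, and $Y[0]\to1$ are equivalences). $\mathbf{Special}((\Delta^+)^{\mathrm{op}},\mathcal{M})$ is the category of special simplicial objects and natural transformations. *)

(* Defs.v *)
From Stdlib Require Import ProofIrrelevance FunctionalExtensionality.
From HB Require Import structures.
From mathcomp Require Import all_boot.
From mathcomp Require Import zify.

Set Implicit Arguments.
Unset Strict Implicit.
Unset Printing Implicit Defensive.

Record Category := {
  ob :> Type;
  hom : ob -> ob -> Type;
  idm : forall a, hom a a;
  comp : forall a b c, hom b c -> hom a b -> hom a c;
  comp_id_l : forall a b (f : hom a b), comp (idm b) f = f;
  comp_id_r : forall a b (f : hom a b), comp f (idm a) = f;
  comp_assoc : forall a b c d (h : hom c d) (g : hom b c) (f : hom a b),
      comp h (comp g f) = comp (comp h g) f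
}.
Arguments hom {_}.
Arguments idm {_}.
Arguments comp {_ _ _ _}.

Record Functor (C D : Category) := {
  fob :> C -> D;
  fmap : forall a b, hom a b -> hom (fob a) (fob b);
  fmap_id : forall a, fmap (idm a) = idm (fob a);
  fmap_comp : forall a b c (g : hom b c) (f : hom a b),
      fmap (comp g f) = comp (fmap g) (fmap f)
}.
Arguments fmap {C D} _ {a b}.

Definition idF_fmap (C : Category) (a b : C) (f : hom a b) : hom a b := f.
Program Definition idF (C : Category) : Functor C C :=
  {| fob := fun a => a; fmap := @idF_fmap C |}.

Program Definition compF (C D E : Category) (G : Functor D E) (F : Functor C D)
  : Functor C E :=
  {| fob := fun a => G (F a); fmap := fun a b f => fmap G (fmap F f) |}.
Next Obligation. by rewrite !fmap_id. Qed.
Next Obligation. by rewrite !fmap_comp. Qed.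

Definition hom_cast (C : Category) (a b a' b' : C) (ea : a = a') (eb : b = b')
  (f : hom a b) : hom a' b' :=
  match ea in _ = x, eb in _ = y return hom x y with erefl, erefl => f end.

Definition functor_eq (C D : Category) (F G : Functor C D) : Prop :=
  exists e : forall x, F x = G x,
    forall a b (f : hom a b), hom_cast (e a) (e b) (fmap F f) = fmap G f.

Definition iso_of_categories (C D : Category) : Prop :=
  exists (F : Functor C D) (G : Functor D C),
    functor_eq (compF G F) (idF C) /\ functor_eq (compF F G) (idF D).

Program Definition opCat (C : Category) : Category :=
  {| ob := ob C; hom := fun a b => @hom C b a; idm := fun a => @idm C a;
     comp := fun a b c g f => comp f g |}.
Next Obligation. exact: comp_id_r. Qed.
Next Obligation. exact: comp_id_l. Qed.
Next Obligation. by rewrite comp_assoc. Qed.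

Definition is_iso (C : Category) (a b : C) (f : hom a b) : Prop :=
  exists g : hom b a, comp g f = idm a /\ comp f g = idm b.

Record CartCat := {
  ccat :> Category;
  one : ccat;
  bang : forall a : ccat, hom a one;
  bang_uniq : forall a (f : hom a one), f = bang a;
  prod : ccat -> ccat -> ccat;
  p1 : forall a b : ccat, hom (prod a b) a;
  p2 : forall a b : ccat, hom (prod a b) b;
  pair : forall c a b : ccat, hom c a -> hom c b -> hom c (prod a b);
  pair_p1 : forall c a b (f : hom c a) (g : hom c b), comp (p1 a b) (pair f g) = f;
  pair_p2 : forall c a b (f : hom c a) (g : hom c b), comp (p2 a b) (pair f g) = g;
  pair_uniq : forall c a b (h : hom c (prod a b)),
      h = pair (comp (p1 a b) h) (comp (p2 a b) h)
}.
Arguments one {_}.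
Arguments bang {_}.
Arguments prod {_}.
Arguments p1 {_}.
Arguments p2 {_}.
Arguments pair {_ _ _ _}.

Section CartOps.
Variable M : CartCat.

Definition tensor (a b a' b' : M) (f : hom a a') (g : hom b b')
  : hom (prod a b) (prod a' b') :=
  pair (comp f (p1 a b)) (comp g (p2 a b)).

Definition assoc (a b c : M) : hom (prod (prod a b) c) (prod a (prod b c)) :=
  pair (comp (p1 a b) (p1 _ c)) (pair (comp (p2 a b) (p1 _ c)) (p2 _ c)).

Definition lunit_inv (a : M) : hom a (prod one a) := pair (bang a) (idm a).
Definition runit_inv (a : M) : hom a (prod a one) := pair (idm a) (bang a).

Fixpoint pow (a : M) (n : nat) : M :=
  match n with 0 => one | n'.+1 => prod a (pow a n') end.

Fixpoint tuple_map (b a : M) (n : nat) : ('I_n -> hom b a) -> hom b (pow a n) :=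
  match n return ('I_n -> hom b a) -> hom b (pow a n) with
  | 0 => fun _ => bang b
  | n'.+1 => fun fs => pair (fs ord0) (@tuple_map b a n' (fun i => fs (lift ord0 i)))
  end.
End CartOps.

Record CartEqCat := {
  cartcat :> CartCat;
  equiv : forall a b : cartcat, hom a b -> Prop;
  equiv_iso : forall a b (f : hom a b), is_iso f -> equiv f;
  equiv_2of3_comp : forall a b c (f : hom a b) (g : hom b c),
      equiv f -> equiv g -> equiv (comp g f);
  equiv_2of3_left : forall a b c (f : hom a b) (g : hom b c),
      equiv f -> equiv (comp g f) -> equiv g;
  equiv_2of3_right : forall a b c (f : hom a b) (g : hom b c),
      equiv g -> equiv (comp g f) -> equiv f;
  equiv_tensor : forall a b a' b' (f : hom a a') (g : hom b b'),
      equiv f -> equiv g -> equiv (tensor f g)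
}.
Arguments equiv {_ _ _}.

Definition monob (m n : nat) (f : {ffun 'I_m -> 'I_n}) : bool :=
  [forall i : 'I_m, forall j : 'I_m, (i <= j) ==> (f i <= f j)].

Definition DHom (m n : nat) := {f : {ffun 'I_m -> 'I_n} | monob f}.

Lemma monob_id n : monob [ffun i : 'I_n => i].
Proof. by apply/forallP => i; apply/forallP => j; rewrite !ffunE; apply/implyP. Qed.

Definition did (n : nat) : DHom n n := exist (fun f => monob f) _ (monob_id n).

Lemma monob_comp l m n (g : DHom m n) (f : DHom l m) :
  monob [ffun i => sval g (sval f i)].
Proof.
case: g => g /= /forallP hg; case: f => f /= /forallP hf.
apply/forallP => i; apply/forallP => j; rewrite !ffunE; apply/implyP => hij.
have := forallP (hf i) j; rewrite hij /= => hfij.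
by have := forallP (hg (f i)) (f j); rewrite hfij.
Qed.

Definition dcomp l m n (g : DHom m n) (f : DHom l m) : DHom l n :=
  exist (fun f => monob f) _ (monob_comp g f).

Lemma DHom_ext m n (f g : DHom m n) : (forall i, sval f i = sval g i) -> f = g.
Proof. by move=> h; apply: val_inj; apply/ffunP. Qed.

Program Definition Delta : Category :=
  {| ob := nat; hom := DHom; idm := did; comp := dcomp |}.
Next Obligation. by apply: DHom_ext => i /=; rewrite !ffunE. Qed.
Next Obligation. by apply: DHom_ext => i /=; rewrite !ffunE. Qed.
Next Obligation. by apply: DHom_ext => i /=; rewrite !ffunE. Qed.

(* Delta^+ : the object n stands for [n] = {0..n}; morphisms are the
   order-preserving maps [m] -> [n] *)
Program Definition DeltaPlus : Category :=
  {| ob := nat; hom := fun m n => DHom m.+1 n.+1;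
     idm := fun n => did n.+1; comp := fun l m n g f => dcomp g f |}.
Next Obligation. by apply: DHom_ext => i /=; rewrite !ffunE. Qed.
Next Obligation. by apply: DHom_ext => i /=; rewrite !ffunE. Qed.
Next Obligation. by apply: DHom_ext => i /=; rewrite !ffunE. Qed.

Definition dsum_fun m n m' n' (f : DHom m n) (g : DHom m' n') (i : 'I_(m + m'))
  : 'I_(n + n') :=
  match split i with
  | inl j => lshift n' (sval f j)
  | inr k => rshift n (sval g k)
  end.

Lemma monob_dsum m n m' n' (f : DHom m n) (g : DHom m' n') :
  monob [ffun i => dsum_fun f g i].
Proof.
case: f => f hf0; case: g => g hg0.
have /forallP hf := hf0; have /forallP hg := hg0.
apply/forallP => i; apply/forallP => j; rewrite !ffunE /dsum_fun /=; apply/implyP.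
case: splitP => [i' ei|i' ei]; case: splitP => [j' ej|j' ej] /=;
  rewrite ei ej => hij.
- by have := forallP (hf i') j'; rewrite hij.
- by rewrite (leq_trans (ltnW (ltn_ord _))) ?leq_addr.
- by move: hij; have := ltn_ord j'; lia.
- have := forallP (hg i') j'; rewrite leq_add2l in hij; rewrite hij /=.
  by rewrite leq_add2l.
Qed.

Definition dsum m n m' n' (f : DHom m n) (g : DHom m' n') : DHom (m + m') (n + n') :=
  exist (fun f => monob f) _ (monob_dsum f g).

(* the identity-on-elements morphism m -> n for m = n (used to compare
   X(m) and X(n) for propositionally equal m, n) *)
Lemma monob_cast m n (e : m = n) : monob [ffun i => cast_ord e i].
Proof. by apply/forallP => i; apply/forallP => j; rewrite !ffunE; apply/implyP. Qed.

Definition dcast m n (e : m = n) : DHom m n := exist (fun f => monob f) _ (monob_cast e).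

Lemma monob_beta n (j : 'I_n) : monob [ffun i : 'I_2 => (inord (i + j) : 'I_n.+1)].
Proof.
apply/forallP => i; apply/forallP => i'; rewrite !ffunE; apply/implyP => h.
have hi := ltn_ord i; have hi' := ltn_ord i'; have hj := ltn_ord j.
rewrite !inordK; lia.
Qed.

Definition beta n (j : 'I_n) : @hom DeltaPlus 1 n := exist (fun f => monob f) _ (monob_beta j).

Lemma comp_pair (M : CartCat) (d c a b : M) (f : hom c a) (g : hom c b) (h : hom d c) :
  comp (pair f g) h = pair (comp f h) (comp g h).
Proof.
rewrite [LHS]pair_uniq !comp_assoc pair_p1 pair_p2 //.
Qed.

Lemma tensor_comp (M : CartCat) (a b a' b' a'' b'' : M)
  (f : hom a' a'') (g : hom b' b'') (f' : hom a a') (g' : hom b b') :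
  comp (tensor f g) (tensor f' g') = tensor (comp f f') (comp g g').
Proof.
rewrite /tensor comp_pair -!comp_assoc pair_p1 pair_p2.
by rewrite !comp_assoc.
Qed.

(* HtyAlg(Mon, M): colax monoidal functors (Delta,+,0) -> (M,x,1) whose  *)
(* structure maps are equivalences, and monoidal transformations         *)

Section HtyAlg.
Variable M : CartEqCat.

Record HtyObj := {
  hX : Functor Delta M;
  xi : forall m n : nat, hom (hX (m + n)) (prod (hX m) (hX n));
  xi0 : hom (hX 0) one;
  xi_nat : forall m n m' n' (f : DHom m n) (g : DHom m' n'),
      comp (xi n n') (fmap hX (dsum f g : @hom Delta _ _))
      = comp (tensor (fmap hX (f : @hom Delta _ _)) (fmap hX (g : @hom Delta _ _)))
             (xi m m');
  (* coassociativity (the canonical identification (l+m)+n = l+(m+n) in Delta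
     is inserted explicitly) *)
  xi_coassoc : forall l m n,
      comp (assoc _ _ _) (comp (tensor (xi l m) (idm _)) (xi (l + m) n))
      = comp (tensor (idm _) (xi m n))
             (comp (xi l (m + n)) (fmap hX (dcast (esym (addnA l m n)) : @hom Delta _ _)));
  xi_counit_l : forall n,
      comp (tensor xi0 (idm (hX n))) (xi 0 n) = lunit_inv (hX n);
  xi_counit_r : forall n,
      comp (tensor (idm (hX n)) xi0) (xi n 0)
      = comp (runit_inv (hX n)) (fmap hX (dcast (addn0 n) : @hom Delta _ _));
  xi0_equiv : equiv xi0;
  xi_equiv : forall m n, equiv (xi m n)
}.

Record HtyHom (X Y : HtyObj) := {
  th : forall n : nat, hom (hX X n) (hX Y n);
  th_nat : forall m n (f : DHom m n),
      comp (th n) (fmap (hX X) (f : @hom Delta _ _))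
      = comp (fmap (hX Y) (f : @hom Delta _ _)) (th m);
  th_mon : forall m n,
      comp (xi Y m n) (th (m + n)) = comp (tensor (th m) (th n)) (xi X m n);
  th_mon0 : comp (xi0 Y) (th 0) = xi0 X
}.

Lemma HtyHom_ext X Y (s t : HtyHom X Y) : (forall n, th s n = th t n) -> s = t.
Proof.
case: s => s sn sm s0; case: t => t tn tm t0 /= e.
have ee : s = t by apply: functional_extensionality_dep.
subst t; f_equal; apply: proof_irrelevance.
Qed.

Program Definition hty_id (X : HtyObj) : HtyHom X X :=
  {| th := fun n => idm (hX X n) |}.
Next Obligation. by rewrite comp_id_l comp_id_r. Qed.
Next Obligation.
rewrite comp_id_r /tensor !comp_id_l -[LHS]comp_id_l.
by rewrite [idm _ in LHS]pair_uniq !comp_id_r.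
Qed.
Next Obligation. by rewrite comp_id_r. Qed.

Program Definition hty_comp (X Y Z : HtyObj) (t : HtyHom Y Z) (s : HtyHom X Y)
  : HtyHom X Z := {| th := fun n => comp (th t n) (th s n) |}.
Next Obligation.
by rewrite -comp_assoc th_nat !comp_assoc th_nat.
Qed.
Next Obligation.
by rewrite comp_assoc th_mon -comp_assoc th_mon comp_assoc tensor_comp.
Qed.
Next Obligation. by rewrite comp_assoc !th_mon0. Qed.

Program Definition HtyAlg : Category :=
  {| ob := HtyObj; hom := HtyHom; idm := hty_id; comp := hty_comp |}.
Next Obligation. by apply: HtyHom_ext => n /=; rewrite comp_id_l. Qed.
Next Obligation. by apply: HtyHom_ext => n /=; rewrite comp_id_r. Qed.
Next Obligation. by apply: HtyHom_ext => n /=; rewrite comp_assoc. Qed.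

End HtyAlg.

Section Special.
Variable M : CartEqCat.

Definition segal_map (Y : Functor (opCat DeltaPlus) M) (n : nat)
  : hom (Y n) (pow (Y 1) n) :=
  tuple_map (fun j : 'I_n => fmap Y (beta j : @hom (opCat DeltaPlus) n 1)).

Record SpObj := {
  sY : Functor (opCat DeltaPlus) M;
  special : forall n : nat, equiv (segal_map sY n)
}.

Record SpHom (X Y : SpObj) := {
  sth : forall n : nat, hom (sY X n) (sY Y n);
  sth_nat : forall m n (f : @hom (opCat DeltaPlus) m n),
      comp (sth n) (fmap (sY X) f) = comp (fmap (sY Y) f) (sth m)
}.

Lemma SpHom_ext X Y (s t : SpHom X Y) : (forall n, sth s n = sth t n) -> s = t.
Proof.
case: s => s sn; case: t => t tn /= e.
have ee : s = t by apply: functional_extensionality_dep.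
subst t; f_equal; apply: proof_irrelevance.
Qed.

Program Definition sp_id (X : SpObj) : SpHom X X :=
  {| sth := fun n => idm (sY X n) |}.
Next Obligation. by rewrite comp_id_l comp_id_r. Qed.

Program Definition sp_comp (X Y Z : SpObj) (t : SpHom Y Z) (s : SpHom X Y)
  : SpHom X Z := {| sth := fun n => comp (sth t n) (sth s n) |}.
Next Obligation.
by rewrite -comp_assoc sth_nat !comp_assoc sth_nat.
Qed.

Program Definition Special : Category :=
  {| ob := SpObj; hom := SpHom; idm := sp_id; comp := sp_comp |}.
Next Obligation. by apply: SpHom_ext => n /=; rewrite comp_id_l. Qed.
Next Obligation. by apply: SpHom_ext => n /=; rewrite comp_id_r. Qed.
Next Obligation. by apply: SpHom_ext => n /=; rewrite comp_assoc. Qed.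

End Special.

(* Main.v *)
Require Import Defs.
From Stdlib Require Import ProofIrrelevance FunctionalExtensionality JMeq.
From HB Require Import structures.
From mathcomp Require Import all_boot.
From mathcomp Require Import zify.
Require Import Defs.

Set Implicit Arguments.
Unset Strict Implicit.
Unset Printing Implicit Defensive.


Definition ev m n (f : DHom m n) (i : nat) : nat :=
  nth 0 [seq val (sval f x) | x <- enum 'I_m] i.

Lemma evE m n (f : DHom m n) (i : 'I_m) : val (sval f i) = ev f i.
Proof.
rewrite /ev (nth_map i) ?size_enum_ord ?ltn_ord //.
by rewrite nth_ord_enum.
Qed.

Lemma evO m n (f : DHom m n) (i : nat) (H : i < m) : ev f i = val (sval f (Ordinal H)).
Proof. by rewrite evE. Qed.

Lemma DHom_extn m n (f g : DHom m n) : (forall i, i < m -> ev f i = ev g i) -> f = g.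
Proof. move=> h; apply: DHom_ext => i; apply/val_inj; rewrite !evE; exact: h. Qed.

Lemma ev_lt m n (f : DHom m n) i : i < m -> ev f i < n.
Proof. by move=> H; rewrite (evO _ H); apply: ltn_ord. Qed.

Lemma ev_mono m n (f : DHom m n) i j : i <= j -> j < m -> ev f i <= ev f j.
Proof.
move=> hij hj; have hi : i < m by apply: leq_ltn_trans hj.
rewrite (evO _ hi) (evO _ hj); case: f => f /= /forallP hf.
by have := forallP (hf (Ordinal hi)) (Ordinal hj); rewrite /= hij.
Qed.

Section MkD.
Variables (m n : nat) (phi : nat -> nat).
Hypothesis Hb : forall i, i < m -> phi i < n.
Hypothesis Hm : forall i j, i <= j -> j < m -> phi i <= phi j.

Lemma monob_mk : monob [ffun i : 'I_m => Ordinal (Hb (ltn_ord i))].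
Proof.
apply/forallP => i; apply/forallP => j; rewrite !ffunE; apply/implyP => hij /=.
exact: Hm.
Qed.

Definition mkD : DHom m n := exist (fun f => monob f) _ monob_mk.

Lemma ev_mkD i : i < m -> ev mkD i = phi i.
Proof. by move=> H; rewrite (evO _ H) /= ffunE. Qed.
End MkD.

Lemma ev_comp l m n (g : DHom m n) (f : DHom l m) i :
  i < l -> ev (dcomp g f) i = ev g (ev f i).
Proof.
move=> H; rewrite (evO _ H) /= ffunE.
have -> : ev f i = val (sval f (Ordinal H)) by rewrite evO.
exact: evE.
Qed.

Lemma ev_did n i : i < n -> ev (did n) i = i.
Proof. by move=> H; rewrite (evO _ H) /= ffunE. Qed.

Lemma ev_dcast m n (e : m = n) i : i < m -> ev (dcast e) i = i.
Proof. by move=> H; rewrite (evO _ H) /= ffunE. Qed.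

Lemma ev_dsum m n m' n' (f : DHom m n) (g : DHom m' n') i : i < m + m' ->
  ev (dsum f g) i = if i < m then ev f i else n + ev g (i - m).
Proof.
move=> H; rewrite (evO _ H) /= ffunE /dsum_fun.
case: splitP => [j /= ej|j /= ej]; rewrite ej.
- by rewrite ltn_ord /= evE.
- by rewrite ltnNge leq_addr /= addKn evE.
Qed.

Lemma dcast_id n (e : n = n) : dcast e = did n.
Proof. by apply: DHom_extn => i H; rewrite ev_dcast // ev_did. Qed.

Lemma sumb_le m (P : nat -> bool) : \sum_(i < m) P i <= m.
Proof.
elim: m => [|m IH]; first by rewrite big_ord0.
by rewrite big_ord_recr /= -addn1 leq_add // leq_b1.
Qed.

Lemma sumb_thr m (P : nat -> bool) t :
  (forall i, i < m -> P i = (i < t)) -> \sum_(i < m) P i = minn t m.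
Proof.
elim: m => [|m IH] h; first by rewrite big_ord0; lia.
rewrite big_ord_recr /= IH ?h //; last by move=> i hi; apply: h; lia.
case: (ltnP m t) => /= ?; lia.
Qed.

Lemma sumb_ext m (P Q : nat -> bool) :
  (forall i, i < m -> P i = Q i) -> \sum_(i < m) P i = \sum_(i < m) Q i.
Proof. by move=> h; apply: eq_bigr => i _; rewrite h. Qed.

Lemma sumb_down m (P : nat -> bool) :
  (forall i j, i <= j -> j < m -> P j -> P i) ->
  forall k, k < m -> (k < \sum_(i < m) P i) = P k.
Proof.
elim: m => [|m IH] hd k hk //.
have hd' : forall i j, i <= j -> j < m -> P j -> P i.
  by move=> i j ? ? ?; apply: (hd i j) => //; lia.
rewrite big_ord_recr /=.
case Pm: (P m).
- have -> : \sum_(i < m) P i = m.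
    rewrite (@sumb_thr _ _ m) ?minnn // => i hi.
    by rewrite hi; apply: (hd i m) => //; lia.
  rewrite addn1 ltnS; have -> : k <= m by lia.
  by symmetry; apply: (hd k m) => //; lia.
- rewrite addn0; case: (ltnP k m) => hkm; first exact: IH.
  have -> : k = m by lia.
  by rewrite Pm ltnNge sumb_le.
Qed.

Lemma sumb_split m m' (P : nat -> bool) :
  \sum_(i < m + m') P i = \sum_(i < m) P i + \sum_(i < m') P (m + i).
Proof. by rewrite big_split_ord. Qed.


Lemma sumb_mono m (P Q : nat -> bool) :
  (forall i, i < m -> P i -> Q i) -> \sum_(i < m) P i <= \sum_(i < m) Q i.
Proof.
move=> h; apply: leq_sum => i _; case Pi: (P i); last by [].
by rewrite (h i (ltn_ord i) Pi).
Qed.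

(* the (Joyal) dual of a Delta map *)
Definition Dphi m n (f : DHom m n) (j : nat) := \sum_(i < m) (ev f i < j).

Lemma Dphi_b m n (f : DHom m n) j : j < n.+1 -> Dphi f j < m.+1.
Proof. by move=> _; rewrite ltnS; exact: (sumb_le m (fun i => ev f i < j)). Qed.

Lemma Dphi_m m n (f : DHom m n) i j : i <= j -> j < n.+1 -> Dphi f i <= Dphi f j.
Proof. by move=> hij _; apply: (sumb_mono (P:=fun k => ev f k < i) (Q := fun k => ev f k < j)) => k _ h; apply: leq_trans hij. Qed.

Definition Dual m n (f : DHom m n) : DHom n.+1 m.+1 := mkD (@Dphi_b m n f) (@Dphi_m m n f).

Lemma ev_Dual m n (f : DHom m n) j : j < n.+1 -> ev (Dual f) j = Dphi f j.
Proof. exact: ev_mkD. Qed.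

Lemma Dphi_down m n (f : DHom m n) j k : k < m -> (k < Dphi f j) = (ev f k < j).
Proof.
move=> hk; rewrite /Dphi (@sumb_down m (fun i => ev f i < j)) //.
move=> i i' hii' hi' h; apply: leq_ltn_trans h; exact: ev_mono.
Qed.

Definition Fphi m n (g : DHom m.+1 n.+1) (i : nat) := \sum_(j < m.+1) (ev g j <= i).

Lemma Fphi_b m n (g : DHom m.+1 n.+1) i : i < n -> Fphi g i < 1 + (m + 1).
Proof. by move=> _; rewrite /Fphi add1n addn1 ltnS; exact: (sumb_le m.+1 (fun j => ev g j <= i)). Qed.

Lemma Fphi_m m n (g : DHom m.+1 n.+1) i j : i <= j -> j < n -> Fphi g i <= Fphi g j.
Proof. by move=> hij _; apply: (sumb_mono (P:=fun k => ev g k <= i) (Q := fun k => ev g k <= j)) => k _ h; apply: leq_trans hij. Qed.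

Definition flat m n (g : DHom m.+1 n.+1) : DHom n (1 + (m + 1)) :=
  mkD (@Fphi_b m n g) (@Fphi_m m n g).

Lemma ev_flat m n (g : DHom m.+1 n.+1) i : i < n -> ev (flat g) i = Fphi g i.
Proof. exact: ev_mkD. Qed.

Lemma Fphi_down m n (g : DHom m.+1 n.+1) i k : k < m.+1 -> (k < Fphi g i) = (ev g k <= i).
Proof.
move=> hk; rewrite /Fphi (@sumb_down m.+1 (fun j => ev g j <= i)) //.
move=> a b hab hb h; apply: leq_trans h; exact: ev_mono.
Qed.

Lemma a1_b m n i : i < m.+1 -> i < (m + n).+1.
Proof. lia. Qed.
Lemma a1_m i j : i <= j -> j < 0 -> i <= j. Proof. by []. Qed.
Definition alpha1 m n : DHom m.+1 (m + n).+1 :=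
  mkD (phi := fun i => i) (@a1_b m n) (fun i j h _ => h).
Lemma a2_b m n i : i < n.+1 -> m + i < (m + n).+1.
Proof. lia. Qed.
Definition alpha2 m n : DHom n.+1 (m + n).+1 :=
  mkD (phi := fun i => m + i) (@a2_b m n) (fun i j h _ => leq_add (leqnn m) h).
Lemma z_b a i : i < a -> 0 < 1. Proof. by []. Qed.
Definition zD a : DHom a 1 := mkD (phi := fun _ => 0) (@z_b a) (fun _ _ _ _ => leqnn 0).

Lemma ev_a1 m n i : i < m.+1 -> ev (alpha1 m n) i = i.
Proof. exact: ev_mkD. Qed.
Lemma ev_a2 m n i : i < n.+1 -> ev (alpha2 m n) i = m + i.
Proof. exact: ev_mkD. Qed.
Lemma ev_zD a i : i < a -> ev (zD a) i = 0.
Proof. exact: ev_mkD. Qed.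

Lemma Dual_id n : Dual (did n) = did n.+1.
Proof.
apply: DHom_extn => j hj; rewrite ev_Dual // ev_did // /Dphi.
rewrite (@sumb_thr n (fun i => ev (did n) i < j) j); first lia.
by move=> i hi; rewrite ev_did.
Qed.

Lemma Dual_comp l m n (g : DHom m n) (f : DHom l m) :
  Dual (dcomp g f) = dcomp (Dual f) (Dual g).
Proof.
apply: DHom_extn => j hj; rewrite ev_comp // !ev_Dual //; last exact: Dphi_b.
apply: (sumb_ext (P := fun i => ev (dcomp g f) i < j) (Q := fun i => ev f i < Dphi g j)) => i hi.
rewrite ev_comp // Dphi_down //; exact: ev_lt.
Qed.

Lemma Dual_dsum1 m n m' n' (f : DHom m n) (g : DHom m' n') :
  dcomp (Dual (dsum f g)) (alpha1 n n') = dcomp (alpha1 m m') (Dual f).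
Proof.
apply: DHom_extn => j hj; rewrite !ev_comp // ev_a1 // ev_Dual ?ev_a1 //; last lia.
rewrite ev_Dual // /Dphi (sumb_split m m' (fun i => ev (dsum f g) i < j)).
rewrite [X in _ + X](@sumb_thr _ (fun i => ev (dsum f g) (m + i) < j) 0) ?min0n ?addn0.
- apply: (sumb_ext (P := fun i => ev (dsum f g) i < j) (Q := fun i => ev f i < j)) => i hi.
  by rewrite ev_dsum ?hi //; lia.
- move=> i hi; rewrite ev_dsum; last lia.
  rewrite ifN; last lia.
  lia.
- exact: ev_lt.
Qed.

Lemma Dual_dsum2 m n m' n' (f : DHom m n) (g : DHom m' n') :
  dcomp (Dual (dsum f g)) (alpha2 n n') = dcomp (alpha2 m m') (Dual g).
Proof.
apply: DHom_extn => j hj; rewrite !ev_comp // ev_a2 // ev_Dual ?ev_a2 //; try lia;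
  last exact: ev_lt.
rewrite ev_Dual // /Dphi (sumb_split m m' (fun i => ev (dsum f g) i < n + j)).
rewrite [X in X + _](@sumb_thr _ (fun i => ev (dsum f g) i < n + j) m) ?minnn.
- congr (_ + _); apply: (sumb_ext (P := fun i => ev (dsum f g) (m + i) < n + j) (Q := fun i => ev g i < j)) => i hi.
  rewrite ev_dsum; last lia.
  rewrite ifN; last lia.
  by rewrite addKn ltn_add2l.
- move=> i hi; rewrite ev_dsum; last lia.
  rewrite hi; have := ev_lt f hi; lia.
Qed.


Section Cart.
Variable M : CartCat.
Implicit Types a b c d e : M.

Lemma ck a b c d (h : hom c d) (g : hom b c) (f : hom a b) :
  comp (comp h g) f = comp h (comp g f).
Proof. by rewrite comp_assoc. Qed.

Lemma p1_pair_k a b c d (f : hom c a) (g : hom c b) (k : hom d c) :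
  comp (p1 a b) (comp (pair f g) k) = comp f k.
Proof. by rewrite comp_assoc pair_p1. Qed.
Lemma p2_pair_k a b c d (f : hom c a) (g : hom c b) (k : hom d c) :
  comp (p2 a b) (comp (pair f g) k) = comp g k.
Proof. by rewrite comp_assoc pair_p2. Qed.

Lemma p1_tensor_k a b a' b' d (f : hom a a') (g : hom b b') (k : hom d (prod a b)) :
  comp (p1 _ _) (comp (tensor f g) k) = comp f (comp (p1 _ _) k).
Proof. by rewrite /tensor p1_pair_k ck. Qed.
Lemma p2_tensor_k a b a' b' d (f : hom a a') (g : hom b b') (k : hom d (prod a b)) :
  comp (p2 _ _) (comp (tensor f g) k) = comp g (comp (p2 _ _) k).
Proof. by rewrite /tensor p2_pair_k ck. Qed.
Lemma p1_tensor a b a' b' (f : hom a a') (g : hom b b') :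
  comp (p1 _ _) (tensor f g) = comp f (p1 _ _).
Proof. by rewrite /tensor pair_p1. Qed.
Lemma p2_tensor a b a' b' (f : hom a a') (g : hom b b') :
  comp (p2 _ _) (tensor f g) = comp g (p2 _ _).
Proof. by rewrite /tensor pair_p2. Qed.

Lemma p1_assoc_k a b c d (k : hom d _) :
  comp (p1 _ _) (comp (assoc a b c) k) = comp (p1 a b) (comp (p1 _ c) k).
Proof. by rewrite /assoc p1_pair_k ck. Qed.
Lemma p2_assoc_k a b c d (k : hom d _) :
  comp (p2 _ _) (comp (assoc a b c) k) =
  comp (pair (comp (p2 a b) (p1 _ c)) (p2 _ c)) k.
Proof. by rewrite /assoc p2_pair_k. Qed.

Lemma tensor_pair a b a' b' c (f : hom a a') (g : hom b b') (u : hom c a) (v : hom c b) :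
  comp (tensor f g) (pair u v) = pair (comp f u) (comp g v).
Proof. by rewrite /tensor comp_pair -!comp_assoc pair_p1 pair_p2. Qed.

Lemma pair_eta a b : pair (p1 a b) (p2 a b) = idm _.
Proof. by rewrite [RHS]pair_uniq !comp_id_r. Qed.

Lemma pair_ext c a b (h h' : hom c (prod a b)) :
  comp (p1 _ _) h = comp (p1 _ _) h' -> comp (p2 _ _) h = comp (p2 _ _) h' -> h = h'.
Proof. by move=> e1 e2; rewrite [h]pair_uniq [h']pair_uniq e1 e2. Qed.

Lemma bang_comp a b (h : hom a b) : comp (bang b) h = bang a.
Proof. exact: bang_uniq. Qed.

Lemma tensor_id a b : tensor (idm a) (idm b) = idm _.
Proof. by rewrite /tensor !comp_id_l pair_eta. Qed.

Lemma iso_comp a b c (f : hom a b) (g : hom b c) : is_iso f -> is_iso g -> is_iso (comp g f).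
Proof.
move=> [f' [f1 f2]] [g' [g1 g2]]; exists (comp f' g'); split.
- by rewrite ck -(ck g') g1 comp_id_l f1.
- by rewrite ck -(ck f) f2 comp_id_l g2.
Qed.

Lemma iso_id a : is_iso (idm a).
Proof. by exists (idm a); rewrite comp_id_l. Qed.

Lemma iso_tensor a b a' b' (f : hom a a') (g : hom b b') :
  is_iso f -> is_iso g -> is_iso (tensor f g).
Proof.
move=> [f' [f1 f2]] [g' [g1 g2]]; exists (tensor f' g'); split;
  by rewrite tensor_comp ?f1 ?g1 ?f2 ?g2 tensor_id.
Qed.

Ltac cnorm := repeat progress rewrite ?comp_id_l ?comp_id_r ?ck ?comp_pair ?pair_p1 ?pair_p2 ?p1_pair_k ?p2_pair_k.

Lemma assoc_iso a b c : is_iso (assoc a b c).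
Proof.
exists (pair (pair (p1 _ _) (comp (p1 _ _) (p2 _ _))) (comp (p2 _ _) (p2 _ _))); split.
- rewrite /assoc; apply: pair_ext; [apply: pair_ext|]; cnorm => //.
- rewrite /assoc; apply: pair_ext; [|apply: pair_ext]; cnorm => //.
Qed.

Lemma lunit_iso a : is_iso (lunit_inv a).
Proof.
exists (p2 _ _); split; first by rewrite /lunit_inv pair_p2.
rewrite /lunit_inv; apply: pair_ext; cnorm => //.
by rewrite bang_comp; symmetry; apply: bang_uniq.
Qed.

Lemma tuple_map_comp (b b' a : M) n (fs : 'I_n -> hom b a) (h : hom b' b) :
  comp (tuple_map fs) h = tuple_map (fun i => comp (fs i) h).
Proof.
elim: n fs => [|n IH] fs /=; first exact: bang_comp.
by rewrite comp_pair IH.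
Qed.

End Cart.

Ltac cnorm := repeat progress rewrite ?comp_id_l ?comp_id_r ?ck ?comp_pair ?pair_p1 ?pair_p2 ?p1_pair_k ?p2_pair_k.


Section Hty.
Variable M : CartEqCat.
Variable X : HtyObj M.
Local Notation XX := (hX X).
Local Notation XF f := (fmap (hX X) (f : @hom Delta _ _)).
Local Notation x := (xi X).

Lemma XF_comp_k l m n d (f : DHom m n) (g : DHom l m) (k : hom d _) :
  comp (XF f) (comp (XF g) k) = comp (XF (dcomp f g)) k.
Proof. by rewrite -ck -fmap_comp. Qed.

Lemma XF_comp l m n (f : DHom m n) (g : DHom l m) :
  comp (XF f) (XF g) = XF (dcomp f g).
Proof. by rewrite -fmap_comp. Qed.

Lemma XF_id n : XF (did n) = idm _.
Proof. exact: (fmap_id XX n). Qed.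

Lemma P1k m n m' n' d (f : DHom m n) (g : DHom m' n') (k : hom d _) :
  comp (p1 _ _) (comp (x n n') (comp (XF (dsum f g)) k))
  = comp (XF f) (comp (p1 _ _) (comp (x m m') k)).
Proof. by rewrite -(ck (x n n')) xi_nat ck p1_tensor_k. Qed.

Lemma P2k m n m' n' d (f : DHom m n) (g : DHom m' n') (k : hom d _) :
  comp (p2 _ _) (comp (x n n') (comp (XF (dsum f g)) k))
  = comp (XF g) (comp (p2 _ _) (comp (x m m') k)).
Proof. by rewrite -(ck (x n n')) xi_nat ck p2_tensor_k. Qed.

Lemma LLk l m n d (k : hom d _) :
  comp (p1 _ _) (comp (x l m) (comp (p1 _ _) (comp (x (l + m) n) k)))
  = comp (p1 _ _) (comp (x l (m + n)) (comp (XF (dcast (esym (addnA l m n)))) k)).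
Proof.
have := congr1 (fun h => comp (p1 _ _) (comp h k)) (xi_coassoc X l m n).
by rewrite /= !ck p1_assoc_k p1_tensor_k p1_tensor_k comp_id_l.
Qed.

Lemma MLk l m n d (k : hom d _) :
  comp (p2 _ _) (comp (x l m) (comp (p1 _ _) (comp (x (l + m) n) k)))
  = comp (p1 _ _) (comp (x m n) (comp (p2 _ _) (comp (x l (m + n))
       (comp (XF (dcast (esym (addnA l m n)))) k)))).
Proof.
have := congr1 (fun h => comp (p1 _ _) (comp (p2 _ _) (comp h k))) (xi_coassoc X l m n).
by rewrite /= !ck p2_assoc_k p1_pair_k !ck p1_tensor_k p2_tensor_k.
Qed.

Lemma RRk l m n d (k : hom d _) :
  comp (p2 _ _) (comp (x (l + m) n) k)
  = comp (p2 _ _) (comp (x m n) (comp (p2 _ _) (comp (x l (m + n))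
       (comp (XF (dcast (esym (addnA l m n)))) k)))).
Proof.
have := congr1 (fun h => comp (p2 _ _) (comp (p2 _ _) (comp h k))) (xi_coassoc X l m n).
by rewrite /= !ck p2_assoc_k p2_pair_k p2_tensor_k p2_tensor_k comp_id_l.
Qed.

Lemma CLk n d (k : hom d _) : comp (p2 _ _) (comp (x 0 n) k) = k.
Proof.
have := congr1 (fun h => comp (p2 _ _) (comp h k)) (xi_counit_l X n).
by rewrite /= !ck p2_tensor_k comp_id_l /lunit_inv p2_pair_k comp_id_l.
Qed.

Lemma CRk n d (k : hom d _) :
  comp (p1 _ _) (comp (x n 0) k) = comp (XF (dcast (addn0 n))) k.
Proof.
have := congr1 (fun h => comp (p1 _ _) (comp h k)) (xi_counit_r X n).
by rewrite /= !ck p1_tensor_k comp_id_l /runit_inv p1_pair_k comp_id_l.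
Qed.

(* restriction to the middle part of 1 + (m + 1) *)
Definition R m : hom (XX (1 + (m + 1))) (XX m) :=
  locked (comp (p1 _ _) (comp (x m 1) (comp (p2 _ _) (x 1 (m + 1))))).

Lemma GR a kk c k' d (f : DHom k' kk) (h : hom d _) :
  comp (R kk) (comp (XF (dsum (zD a) (dsum f (zD c)))) h)
  = comp (XF f) (comp (p1 _ _) (comp (x k' c) (comp (p2 _ _) (comp (x a (k' + c)) h)))).
Proof. by rewrite /R -!lock !ck P2k P1k. Qed.

Definition collapse c : DHom ((1 + 1) + ((c + 1) + 1)) (1 + (c + 1)) :=
  locked (dcomp (dsum (did 1) (dcomp (dsum (did c) (zD (1 + 1))) (dcast (esym (addnA c 1 1)))))
        (dsum (zD (1 + 1)) (did ((c + 1) + 1)))).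

Lemma RR_collapse c d (k : hom d _) :
  comp (p1 _ _) (comp (x c 1) (comp (p2 _ _) (comp (x 1 (c + 1))
  (comp (p1 _ _) (comp (x (1 + (c + 1)) 1) (comp (p2 _ _) (comp (x 1 ((1 + (c + 1)) + 1)) k)))))))
  = comp (R c) (comp (XF (collapse c)) k).
Proof.
rewrite MLk dcast_id XF_id comp_id_l LLk.
rewrite /R /collapse -!lock -XF_comp_k !ck P2k -XF_comp_k P1k XF_id comp_id_l.
rewrite P2k XF_id comp_id_l RRk dcast_id XF_id comp_id_l.
reflexivity.
Qed.

End Hty.

Lemma GR0 (M : CartEqCat) (X : HtyObj M) kk k' c d (f : DHom k' kk) (h : hom d _) :
  comp (R X kk) (comp (fmap (hX X) (dsum (zD 0) (dsum f (zD c)) : @hom Delta (k' + c) _)) h)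
  = comp (fmap (hX X) (f : @hom Delta _ _)) (comp (p1 _ _) (comp (xi X k' c) h)).
Proof. by have := @GR M X 0 kk c k' d f h; rewrite CLk. Qed.


Lemma Fphi_le m n (g : DHom m.+1 n.+1) i : Fphi g i <= m.+1.
Proof. exact: (sumb_le m.+1 (fun j => ev g j <= i)). Qed.

Lemma flat_id a :
  flat (did a.+1) = dcomp (dsum (zD 0) (dsum (did a) (zD 0))) (dcast (esym (addn0 a))).
Proof.
apply: DHom_extn => i hi; rewrite ev_flat // ev_comp // ev_dcast // ev_dsum /=; last lia.
rewrite ev_dsum; last lia.
rewrite subn0 hi ev_did // /Fphi.
rewrite (@sumb_thr a.+1 (fun j => ev (did a.+1) j <= i) i.+1); first lia.
by move=> j hj; rewrite ev_did.
Qed.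

Lemma ev_collapse c y : y < (1 + 1) + ((c + 1) + 1) ->
  ev (collapse c) y = if y < 2 then 0 else 1 + minn (y - 2) c.
Proof.
move=> hy; rewrite /collapse -lock ev_comp //.
rewrite [ev (dsum (zD _) _) y]ev_dsum //.
case: (ltnP y 2) => hy2.
- by rewrite ev_zD // ev_dsum // ev_did.
- rewrite ev_did; last lia.
  rewrite ev_dsum; last lia.
  have -> : (1 + (y - (1 + 1)) < 1) = false by lia.
  rewrite ev_comp; last lia.
  rewrite ev_dcast; last lia.
  rewrite ev_dsum; last lia.
  case: ifP => h.
  + rewrite ev_did; lia.
  + rewrite ev_zD; lia.
Qed.

Lemma flat_comp a b c (f : DHom b.+1 a.+1) (g : DHom c.+1 b.+1) :
  flat (dcomp f g) =
  dcomp (collapse c) (dcomp (dsum (did 1) (dsum (flat g) (did 1))) (flat f)).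
Proof.
apply: DHom_extn => i hi; rewrite ev_flat // (ev_comp (collapse c)) // (ev_comp (dsum (did 1) _) (flat f)) // ev_flat //.
have hx := Fphi_le f i.
set xx := Fphi f i.
have -> : Fphi (dcomp f g) i = \sum_(k < c.+1) (ev g k < xx).
  apply: (sumb_ext (P := fun k => ev (dcomp f g) k <= i) (Q := fun k => ev g k < xx)) => k hk.
  by rewrite ev_comp // /xx Fphi_down //; apply: ev_lt.
rewrite ev_dsum; last lia.
case: (ltnP xx 1) => h1.
- rewrite ev_did // ev_collapse; last lia.
  case: ifP => [hh|hh]; last lia.
  rewrite (@sumb_thr c.+1 (fun k => ev g k < xx) 0) ?min0n // => k hk; lia.
- rewrite (ev_dsum (flat g) (did 1)); last lia.
  case: (ltnP (xx - 1) b) => h2.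
  + rewrite ev_flat // ev_collapse; last by have := Fphi_le g (xx - 1); lia.
    have := Fphi_le g (xx - 1).
    have -> : Fphi g (xx - 1) = \sum_(k < c.+1) (ev g k < xx).
      apply: (sumb_ext (P := fun k => ev g k <= xx - 1) (Q := fun k => ev g k < xx)) => k hk.
      lia.
    move=> hb; case: ifP => h3; lia.
  + rewrite ev_did; last lia.
    rewrite ev_collapse; last lia.
    have -> : (1 + (1 + (c + 1) + (xx - 1 - b)) < 2) = false by lia.
    rewrite (@sumb_thr c.+1 (fun k => ev g k < xx) c.+1).
      lia.
    move=> k hk; rewrite hk; have := ev_lt g hk; lia.
Qed.

Lemma flat_Dual m n (f : DHom m n) : flat (Dual f) = dcomp (flat (did n.+1)) f.
Proof.
apply: DHom_extn => i hi; rewrite ev_flat // ev_comp // ev_flat; last exact: ev_lt.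
apply: (sumb_ext (P := fun j => ev (Dual f) j <= i) (Q := fun j => ev (did n.+1) j <= ev f i)) => j hj.
rewrite ev_Dual // ev_did // leqNgt Dphi_down //; lia.
Qed.

Lemma flat_a1 m n : flat (alpha1 m n) = (dsum (zD 0) (dsum (did m) (zD n)) : DHom (m + n) _).
Proof.
apply: DHom_extn => i hi; rewrite ev_flat // (ev_dsum (zD 0) (dsum (did m) (zD n))) //= ev_dsum //.
rewrite /Fphi (@sumb_thr m.+1 (fun j => ev (alpha1 m n) j <= i) i.+1).
  case: ifP => h; [rewrite ev_did // | rewrite ev_zD]; lia.
by move=> j hj; rewrite ev_a1.
by rewrite subn0.
Qed.

Lemma flat_a2 m n : flat (alpha2 m n) =
  dcomp (dsum (zD m) (dsum (did n) (zD 0))) (dsum (did m) (dcast (esym (addn0 n)))).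
Proof.
apply: DHom_extn => i hi; rewrite ev_flat // ev_comp //.
have -> : ev (dsum (did m) (dcast (esym (addn0 n)))) i = i.
  by rewrite ev_dsum //; case: ifP => h; [rewrite ev_did | rewrite ev_dcast]; lia.
rewrite ev_dsum; last lia.
case: (ltnP i m) => h.
- rewrite ev_zD //.
  rewrite /Fphi (@sumb_thr n.+1 (fun j => ev (alpha2 m n) j <= i) 0) ?min0n //.
  by move=> j hj; rewrite ev_a2 //; lia.
- rewrite ev_dsum; last lia.
  have hh : i - m < n by lia.
  rewrite hh ev_did //.
  rewrite /Fphi (@sumb_thr n.+1 (fun j => ev (alpha2 m n) j <= i) (i - m).+1); first lia.
  by move=> j hj; rewrite ev_a2 //; lia.
Qed.


Lemma ev_beta n (j : 'I_n) i : i < 2 -> ev (beta j) i = i + j.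
Proof.
move=> H; rewrite (evO _ H) /= ffunE inordK //=.
have := ltn_ord j; lia.
Qed.

Lemma beta0 n : beta (ord0 : 'I_n.+1) = alpha1 1 n.
Proof. by apply: DHom_extn => i hi; rewrite ev_beta // ev_a1 // addn0. Qed.

Lemma betaS n (j : 'I_n) : beta (lift ord0 j) = dcomp (alpha2 1 n) (beta j).
Proof.
apply: DHom_extn => i hi; rewrite ev_comp // ev_beta // (@ev_a2 1 n); last first.
  by rewrite ev_beta //; have := ltn_ord j; lia.
by rewrite ev_beta //= /bump /=; lia.
Qed.

Section SegalGen.
Variable M : CartEqCat.
Variable Y : Functor (opCat DeltaPlus) M.
Variable xx : forall n, hom (Y (1 + n)) (prod (Y 1) (Y n)).

Fixpoint Sg (n : nat) : hom (Y n) (pow (Y 1) n) :=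
  match n with
  | 0 => bang _
  | n'.+1 => comp (tensor (idm _) (Sg n')) (xx n')
  end.

Hypothesis xx1 : forall n, comp (p1 _ _) (xx n) = fmap Y (alpha1 1 n : @hom (opCat DeltaPlus) _ _).
Hypothesis xx2 : forall n, comp (p2 _ _) (xx n) = fmap Y (alpha2 1 n : @hom (opCat DeltaPlus) _ _).

Lemma segal_Sg n : segal_map Y n = Sg n.
Proof.
elim: n => [|n IH] //=.
rewrite /tensor comp_pair !ck comp_id_l xx1 -IH /segal_map tuple_map_comp /=.
rewrite beta0; congr (pair _ _); congr (tuple_map _); apply: functional_extensionality => j.
by rewrite xx2 -fmap_comp betaS.
Qed.

Lemma Sg_equiv : equiv (bang (Y 0)) -> (forall n, equiv (xx n)) -> forall n, equiv (Sg n).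
Proof.
move=> h0 hx; elim => [|n IH] //=.
apply: equiv_2of3_comp => //; apply: equiv_tensor => //.
by apply: equiv_iso; apply: iso_id.
Qed.

Lemma xx_equiv : (forall n, equiv (Sg n)) -> forall n, equiv (xx n).
Proof.
move=> h n; apply: (@equiv_2of3_right _ _ _ _ _ (tensor (idm _) (Sg n))).
- apply: equiv_tensor => //; by apply: equiv_iso; apply: iso_id.
- exact: (h n.+1).
Qed.
End SegalGen.



Section FDir.
Variable M : CartEqCat.
Variable X : HtyObj M.
Local Notation XX := (hX X).
Local Notation XF f := (fmap (hX X) (f : @hom Delta _ _)).

Definition Yfm (a b : nat) (g : DHom b.+1 a.+1) : hom (XX a) (XX b) :=
  comp (R X b) (XF (flat g)).

Lemma dcast_inv a : dcomp (dcast (addn0 a)) (dcast (esym (addn0 a))) = did a.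
Proof. by apply: DHom_extn => i hi; rewrite ev_comp ?addn0 // ?ev_dcast ?ev_did ?addn0. Qed.

Lemma Y_id a : Yfm (did a.+1) = idm _.
Proof.
rewrite /Yfm flat_id -XF_comp GR CLk CRk XF_id comp_id_l XF_comp dcast_inv.
exact: XF_id.
Qed.

Lemma Y_comp a b c (f : DHom b.+1 a.+1) (g : DHom c.+1 b.+1) :
  Yfm (dcomp f g) = comp (Yfm g) (Yfm f).
Proof.
rewrite /Yfm flat_comp -(@XF_comp M X _ _ _ (collapse c)) -(@XF_comp M X _ _ _ (dsum (did 1) _)).
rewrite !ck -RR_collapse P2k P1k.
by rewrite /R -!lock !ck.
Qed.

Lemma Y_a1 m n : Yfm (alpha1 m n) = comp (p1 _ _) (xi X m n).
Proof.
rewrite /Yfm flat_a1 -[comp (R X m) _]comp_id_r !ck.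
by rewrite GR0 XF_id comp_id_l comp_id_r.
Qed.

Lemma did_split m n :
  did (m + n) = dcomp (dsum (did m) (dcast (addn0 n))) (dsum (did m) (dcast (esym (addn0 n)))).
Proof.
apply: DHom_extn => i hi; rewrite ev_did // ev_comp //.
have -> : ev (dsum (did m) (dcast (esym (addn0 n)))) i = i.
  by rewrite ev_dsum //; case: ifP => h; [rewrite ev_did | rewrite ev_dcast]; lia.
rewrite ev_dsum //; case: (ltnP i m) => h; rewrite ?ev_did ?ev_dcast; lia.
Qed.

Lemma Y_a2 m n : Yfm (alpha2 m n) = comp (p2 _ _) (xi X m n).
Proof.
rewrite /Yfm flat_a2 -XF_comp GR CRk XF_id comp_id_l.
rewrite -[RHS]comp_id_r -(@XF_id M X (m + n)) did_split -XF_comp !ck P2k.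
by [].
Qed.
End FDir.


Section FFun.
Variable M : CartEqCat.

Program Definition YF (X : HtyObj M) : Functor (opCat DeltaPlus) M :=
  {| fob := fun n => hX X n; fmap := fun a b (g : @hom (opCat DeltaPlus) a b) => Yfm X g |}.
Next Obligation. exact: Y_id. Qed.
Next Obligation. exact: Y_comp. Qed.

Lemma YF_special (X : HtyObj M) n : equiv (segal_map (YF X) n).
Proof.
rewrite (@segal_Sg M (YF X) (fun n => xi X 1 n)).
- apply: Sg_equiv; last by move=> k; apply: xi_equiv.
  by rewrite -(bang_uniq (xi0 X)); apply: xi0_equiv.
- by move=> k /=; rewrite Y_a1.
- by move=> k /=; rewrite Y_a2.
Qed.

Definition FX (X : HtyObj M) : SpObj M := {| sY := YF X; special := YF_special X |}.

Lemma th_p1_k (X Y : HtyObj M) (s : HtyHom X Y) m n d (k : hom d _) :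
  comp (th s m) (comp (p1 _ _) (comp (xi X m n) k))
  = comp (p1 _ _) (comp (xi Y m n) (comp (th s (m + n)) k)).
Proof. by rewrite -(p1_tensor_k _ (th s n)) -(ck (tensor _ _)) -th_mon !ck. Qed.

Lemma th_p2_k (X Y : HtyObj M) (s : HtyHom X Y) m n d (k : hom d _) :
  comp (th s n) (comp (p2 _ _) (comp (xi X m n) k))
  = comp (p2 _ _) (comp (xi Y m n) (comp (th s (m + n)) k)).
Proof. by rewrite -(p2_tensor_k (th s m)) -(ck (tensor _ _)) -th_mon !ck. Qed.

Lemma th_R (X Y : HtyObj M) (s : HtyHom X Y) m d (k : hom d _) :
  comp (th s m) (comp (R X m) k) = comp (R Y m) (comp (th s (1 + (m + 1))) k).
Proof. by rewrite /R -!lock !ck th_p1_k th_p2_k. Qed.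

Program Definition FHom (X Y : HtyObj M) (s : HtyHom X Y) : SpHom (FX X) (FX Y) :=
  {| sth := fun n => th s n |}.
Next Obligation.
rewrite /Yfm -[comp (R X n) _]comp_id_r !ck th_R comp_id_r.
by rewrite th_nat.
Qed.

Program Definition FF : Functor (HtyAlg M) (Special M) :=
  {| fob := FX; fmap := fun X Y s => FHom s |}.
Next Obligation. by apply: SpHom_ext. Qed.
Next Obligation. by apply: SpHom_ext. Qed.
End FFun.


Lemma ev_Dual_cast m n (e : m = n) j : j < n.+1 -> ev (Dual (dcast e)) j = j.
Proof.
move=> hj; rewrite ev_Dual // /Dphi.
rewrite (@sumb_thr m (fun i => ev (dcast e) i < j) j); first lia.
by move=> i hi; rewrite ev_dcast.
Qed.

Section XiEquiv.
Variable M : CartEqCat.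
Variable X : Functor Delta M.
Variable x : forall m n : nat, hom (X (m + n)) (prod (X m) (X n)).
Variable x0 : hom (X 0) one.
Hypothesis coassoc : forall l m n,
      comp (assoc _ _ _) (comp (tensor (x l m) (idm _)) (x (l + m) n))
      = comp (tensor (idm _) (x m n))
             (comp (x l (m + n)) (fmap X (dcast (esym (addnA l m n)) : @hom Delta _ _))).
Hypothesis counit_l : forall n, comp (tensor x0 (idm (X n))) (x 0 n) = lunit_inv (X n).
Hypothesis x0e : equiv x0.
Hypothesis x1e : forall n, equiv (x 1 n).

Lemma fmap_dcast_iso m n (e : m = n) : is_iso (fmap X (dcast e : @hom Delta _ _)).
Proof.
exists (fmap X (dcast (esym e) : @hom Delta _ _)); split; rewrite -fmap_comp -fmap_id;
  congr (fmap X _); apply: DHom_extn => i hi /=; rewrite ev_comp // ?ev_dcast ?ev_did //;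
  rewrite ?ev_dcast //; by case: _ / e hi.
Qed.

Lemma x_equiv m n : equiv (x m n).
Proof.
have ide a : equiv (idm a) by apply: equiv_iso; apply: iso_id.
elim: m n => [|m IH] n.
- apply: (@equiv_2of3_right _ _ _ _ _ (tensor x0 (idm _))).
  + exact: equiv_tensor.
  + rewrite counit_l; apply: equiv_iso; exact: lunit_iso.
- have := coassoc 1 m n; rewrite -ck => E.
  apply: (@equiv_2of3_right _ _ _ _ _ (comp (assoc _ _ _) (tensor (x 1 m) (idm _)))).
  + apply: equiv_2of3_comp; first by apply: equiv_tensor.
    by apply: equiv_iso; apply: assoc_iso.
  + rewrite E; apply: equiv_2of3_comp; last by apply: equiv_tensor.
    apply: equiv_2of3_comp => //; apply: equiv_iso; exact: fmap_dcast_iso.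
Qed.
End XiEquiv.

Section GDir.
Variable M : CartEqCat.
Variable Y : SpObj M.
Local Notation YY := (sY Y).
Local Notation YA g := (fmap (sY Y) (g : @hom (opCat DeltaPlus) _ _)).

Lemma YA_comp a b c (g : DHom b.+1 a.+1) (f : DHom c.+1 b.+1) :
  comp (YA f) (YA g) = YA (dcomp g f).
Proof. by rewrite -fmap_comp. Qed.

Lemma YA_comp_k a b c d (g : DHom b.+1 a.+1) (f : DHom c.+1 b.+1) (k : hom d _) :
  comp (YA f) (comp (YA g) k) = comp (YA (dcomp g f)) k.
Proof. by rewrite -ck YA_comp. Qed.

Program Definition XG : Functor Delta M :=
  {| fob := fun n => YY n; fmap := fun a b (f : @hom Delta a b) => YA (Dual f) |}.
Next Obligation. by rewrite Dual_id; exact: (fmap_id YY a). Qed.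
Next Obligation. by rewrite Dual_comp YA_comp. Qed.

Definition xiG m n : hom (YY (m + n)) (prod (YY m) (YY n)) :=
  pair (YA (alpha1 m n)) (YA (alpha2 m n)).

Lemma xiG_nat m n m' n' (f : DHom m n) (g : DHom m' n') :
  comp (xiG n n') (fmap XG (dsum f g : @hom Delta _ _))
  = comp (tensor (fmap XG (f : @hom Delta _ _)) (fmap XG (g : @hom Delta _ _))) (xiG m m').
Proof.
rewrite /xiG /= comp_pair tensor_pair !YA_comp.
by rewrite Dual_dsum1 Dual_dsum2.
Qed.

Lemma xiG_coassoc l m n :
  comp (assoc _ _ _) (comp (tensor (xiG l m) (idm _)) (xiG (l + m) n))
  = comp (tensor (idm _) (xiG m n))
         (comp (xiG l (m + n)) (fmap XG (dcast (esym (addnA l m n)) : @hom Delta _ _))).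
Proof.
rewrite /xiG /= /assoc /tensor; apply: pair_ext; [|apply: pair_ext]; cnorm;
  rewrite ?YA_comp ?YA_comp_k; congr (fmap _ _); apply: DHom_extn => i hi;
  rewrite !ev_comp //; try (rewrite ?ev_a1 ?ev_a2; lia);
  rewrite ?ev_a1 ?ev_a2 ?ev_Dual_cast ?ev_a1 ?ev_a2; lia.
Qed.

Lemma a2_0 n : alpha2 0 n = did n.+1.
Proof. by apply: DHom_extn => i hi; rewrite ev_a2 // ev_did. Qed.

Lemma a1_0 n : alpha1 n 0 = Dual (dcast (addn0 n)).
Proof. by apply: DHom_extn => i hi; rewrite ev_a1 // ev_Dual_cast. Qed.

Lemma xiG_counit_l n :
  comp (tensor (bang (YY 0)) (idm (YY n))) (xiG 0 n) = lunit_inv (YY n).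
Proof.
rewrite /xiG tensor_pair bang_comp comp_id_l a2_0.
by rewrite (fmap_id YY n).
Qed.

Lemma xiG_counit_r n :
  comp (tensor (idm (YY n)) (bang (YY 0))) (xiG n 0)
  = comp (runit_inv (YY n)) (fmap XG (dcast (addn0 n) : @hom Delta _ _)).
Proof.
by rewrite /xiG tensor_pair bang_comp comp_id_l /runit_inv comp_pair comp_id_l bang_comp a1_0.
Qed.

Lemma xiG_equiv m n : equiv (xiG m n).
Proof.
apply: (@x_equiv M XG xiG (bang (YY 0))).
- exact: xiG_coassoc.
- exact: xiG_counit_l.
- exact: (special Y 0).
- apply: (@xx_equiv M YY (fun n => xiG 1 n)).
  move=> k; rewrite -segal_Sg.
  + exact: special.
  + by move=> j; rewrite /xiG pair_p1.
  + by move=> j; rewrite /xiG pair_p2.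
Qed.

Definition GX : HtyObj M :=
  {| hX := XG; xi := xiG; xi0 := bang (YY 0);
     xi_nat := xiG_nat; xi_coassoc := xiG_coassoc;
     xi_counit_l := xiG_counit_l; xi_counit_r := xiG_counit_r;
     xi0_equiv := special Y 0; xi_equiv := xiG_equiv |}.
End GDir.

Program Definition GHom (M : CartEqCat) (Y Z : SpObj M) (t : SpHom Y Z) : HtyHom (GX Y) (GX Z) :=
  {| th := fun n => sth t n |}.
Next Obligation. exact: sth_nat. Qed.
Next Obligation. by rewrite /xiG comp_pair tensor_pair !sth_nat. Qed.
Next Obligation. exact: bang_comp. Qed.

Program Definition GG (M : CartEqCat) : Functor (Special M) (HtyAlg M) :=
  {| fob := @GX M; fmap := fun Y Z t => GHom t |}.
Next Obligation. by apply: HtyHom_ext. Qed.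
Next Obligation. by apply: HtyHom_ext. Qed.


Lemma Functor_eq (C D : Category) (o : C -> D) fm1 fm2 i1 c1 i2 c2 :
  fm1 = fm2 -> @Build_Functor C D o fm1 i1 c1 = @Build_Functor C D o fm2 i2 c2.
Proof.
move=> E; subst fm2; have -> : i1 = i2 by apply: proof_irrelevance.
by have -> : c1 = c2 by apply: proof_irrelevance.
Qed.

Lemma HtyObj_eq (M : CartEqCat) (A B : HtyObj M) (e : hX A = hX B) :
  JMeq (xi A) (xi B) -> JMeq (xi0 A) (xi0 B) -> A = B.
Proof.
case: A e => h x x0 a1 a2 a3 a4 a5 a6; case: B => h' x' x0' b1 b2 b3 b4 b5 b6 /= e.
subst h' => H1 H2; have E1 := JMeq_eq H1; have E2 := JMeq_eq H2; subst x' x0'.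
by f_equal; apply: proof_irrelevance.
Qed.

Lemma SpObj_eq (M : CartEqCat) (A B : SpObj M) : sY A = sY B -> A = B.
Proof.
case: A => h a; case: B => h' b /= e; subst h'.
by f_equal; apply: proof_irrelevance.
Qed.

Section Main.
Variable M : CartEqCat.

Lemma GF_fmap (X : HtyObj M) a b (f : DHom a b) :
  Yfm X (Dual f) = fmap (hX X) (f : @hom Delta _ _).
Proof.
rewrite /Yfm flat_Dual -XF_comp -ck.
change (comp (Yfm X (did b.+1)) (fmap (hX X) (f : @hom Delta _ _)) = fmap (hX X) (f : @hom Delta _ _)).
by rewrite Y_id comp_id_l.
Qed.

Lemma GF_xi (X : HtyObj M) m n : xiG (FX X) m n = xi X m n.
Proof.
rewrite /xiG /=.
change (pair (Yfm X (alpha1 m n)) (Yfm X (alpha2 m n)) = xi X m n).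
by rewrite Y_a1 Y_a2 -pair_uniq.
Qed.

Lemma GF_obj (X : HtyObj M) : GX (FX X) = X.
Proof.
case: X => [[o fm fi fc] x x0 a1 a2 a3 a4 a5 a6].
match goal with |- GX (FX ?Z) = _ => set X := Z end.
have e : hX (GX (FX X)) = hX X.
  apply: Functor_eq; apply: functional_extensionality_dep => a;
  apply: functional_extensionality_dep => b; apply: functional_extensionality => f.
  exact: (GF_fmap X f).
apply: (HtyObj_eq e).
- have E : (xi (GX (FX X)) : forall m n, hom (o (m + n)) (prod (o m) (o n))) = xi X.
    apply: functional_extensionality_dep => m; apply: functional_extensionality_dep => n.
    exact (GF_xi X m n).
  by rewrite -E.
- have E : (xi0 (GX (FX X)) : hom (o 0) one) = xi0 X := esym (bang_uniq (xi0 X)).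
  by rewrite -E.
Qed.

Lemma Dual_flat a b (g : DHom b.+1 a.+1) :
  dcomp (dcomp (Dual (flat g)) (alpha2 1 (b + 1))) (alpha1 b 1) = g.
Proof.
apply: DHom_extn => j hj; rewrite ev_comp // ev_comp ?ev_a1 //; last by lia.
rewrite (@ev_a2 1 (b + 1)); last lia.
rewrite ev_Dual; last lia.
rewrite /Dphi (@sumb_thr a (fun i => ev (flat g) i < 1 + j) (ev g j)).
  by have := ev_lt g hj; lia.
move=> i hi; rewrite ev_flat // add1n ltnS leqNgt Fphi_down //; lia.
Qed.

Lemma FG_fmap (Y : SpObj M) a b (g : DHom b.+1 a.+1) :
  Yfm (GX Y) g = fmap (sY Y) (g : @hom (opCat DeltaPlus) a b).
Proof.
rewrite /Yfm /R -lock /= /xiG !ck p1_pair_k p2_pair_k -!fmap_comp /=.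
by rewrite Dual_flat.
Qed.

Lemma FG_obj (Y : SpObj M) : FX (GX Y) = Y.
Proof.
case: Y => [[o fm fi fc] sp]; apply: SpObj_eq => /=.
apply: Functor_eq; apply: functional_extensionality_dep => a;
apply: functional_extensionality_dep => b; apply: functional_extensionality => g.
exact: (FG_fmap (Build_SpObj (sY := Build_Functor fi fc) sp) g).
Qed.

Lemma hom_cast_hty (a b a' b' : HtyAlg M) (ea : a = a') (eb : b = b')
  (s : hom a b) (t : hom a' b') : (forall n, JMeq (th s n) (th t n)) -> hom_cast ea eb s = t.
Proof.
case: a' / ea t; case: b' / eb => t h /=; apply: HtyHom_ext => n.
exact: JMeq_eq.
Qed.

Lemma hom_cast_sp (a b a' b' : Special M) (ea : a = a') (eb : b = b')
  (s : hom a b) (t : hom a' b') : (forall n, JMeq (sth s n) (sth t n)) -> hom_cast ea eb s = t.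
Proof.
case: a' / ea t; case: b' / eb => t h /=; apply: SpHom_ext => n.
exact: JMeq_eq.
Qed.

Theorem main : iso_of_categories (HtyAlg M) (Special M).
Proof.
exists (FF M), (GG M); split.
- exists GF_obj => a b f; apply: hom_cast_hty => n; exact: JMeq_refl.
- exists FG_obj => a b f; apply: hom_cast_sp => n; exact: JMeq_refl.
Qed.
End Main.


Theorem corollary3p1p9 (M : CartEqCat) : iso_of_categories (HtyAlg M) (Special M).
Proof. exact: main. Qed.
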